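(* Let $1\le n_1\le n$ and let $([n_1],v,e),([n_1],u,g)$ be graphs. Extend both to size $n$ by $v_i=u_i=x_*$ and $e_{ii}=g_{ii}=y_0$ for $n_1+1\le i\le n$, and $e_{ii'}=g_{ii'}=y_*$ whenever $\max\{i,i'\}\ge n_1+1$ and $i\ne i'$. Then $D_n(([n],v,e),([n],u,g))\le D_{n_1}(([n_1],v,e),([n_1],u,g))$.
   Context: $(\mathcal X,d_{\mathcal X})$, $(\mathcal Y,d_{\mathcal Y})$ are pseudometric spaces with $\mathrm{diam}(\mathcal X)\le C_{\mathcal X}$, $\mathrm{diam}(\mathcal Y)\le C_{\mathcal Y}$, $y_0\in\mathcal Y$ a distinguished ''no edge'' element, $p\ge1$, $C_1^p\ge C_{\mathcal X}^p+\frac12C_{\mathcal Y}^p$. New points $x_*\notin\mathcal X$, $y_*\notin\mathcal Y$ are adjoined with $d_{\mathcal X}(x,x_* )^p=d_{\mathcal X}(x_*,x)^p=C_1^p-\frac12C_{\mathcal Y}^p$ for $x\in\mathcal X$, $d_{\mathcal X}(x_*,x_* )=0$, and $d_{\mathcal Y}(y,y_* )=d_{\mathcal Y}(y_*,y)=C_{\mathcal Y}$ for $y\in\mathcal Y$, $d_{\mathcal Y}(y_*,y_* )=0$. A graph $([n],v,e)$ has $v:[n]\to\mathcal X\cup\{x_*\}$ and symmetric $e:[n]^2\to\mathcal Y\cup\{y_*\}$ with $e_{ii}=y_0$; $S_n$ is the set of permutations of $[n]=\{1,\dots,n\}$. For two graphs of equal size $N\ge1$, $$D_N\big(([N],a,g),([N],b,h)\big)=N^{-1/p}\min_{\pi\in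 S_N}\Big[\sum_{i\in[N]}d_{\mathcal X}(a_i,b_{\pi(i)})^p+\frac{1}{2(N-1)}\sum_{(i,i')\in[N]^2}d_{\mathcal Y}(g_{ii'},h_{\pi(i)\pi(i')})^p\Big]^{1/p},$$ with $0/0:=0$ (this equals both GOSPA distances between graphs of equal size). *)

(* Defs.v *)
From mathcomp Require Import all_boot all_order all_algebra perm.
From mathcomp Require Import all_classical all_reals all_analysis.
Set Implicit Arguments. Unset Strict Implicit. Unset Printing Implicit Defensive.
Import Order.TTheory GRing.Theory Num.Theory.
Local Open Scope ring_scope.

Section Defs.
Variable R : realType.

Definition is_pseudometric (T : Type) (d : T -> T -> R) : Prop :=
  [/\ forall x y, 0 <= d x y,
      forall x, d x x = 0,
      forall x y, d x y = d y x &
      forall x y z, d x z <= d x y + d y z].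

(* X u {x_star} is option X (None = x_star); Y u {y_star} is option Y (None = y_star). *)
(* d(x,x_star)^p = C1^p - C_Y^p/2, i.e. d(x,x_star) = (C1^p - C_Y^p/2)^(1/p). *)
Definition dXext (X : Type) (dX : X -> X -> R) (p C1 CY : R)
    (a b : option X) : R :=
  match a, b with
  | Some x, Some x' => dX x x'
  | None, None => 0
  | _, _ => (C1 `^ p - CY `^ p / 2) `^ p^-1
  end.

Definition dYext (Y : Type) (dY : Y -> Y -> R) (CY : R) (a b : option Y) : R :=
  match a, b with
  | Some y, Some y' => dY y y'
  | None, None => 0
  | _, _ => CY
  end.

Definition is_graph (X Y : Type) (y0 : Y) (N : nat)
    (v : 'I_N -> option X) (e : 'I_N -> 'I_N -> option Y) : Prop :=
  (forall i j, e i j = e j i) /\ (forall i, e i i = Some y0).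

Definition Dcost (X Y : Type) (dX' : option X -> option X -> R)
    (dY' : option Y -> option Y -> R) (p : R) (N : nat)
    (a : 'I_N -> option X) (g : 'I_N -> 'I_N -> option Y)
    (b : 'I_N -> option X) (h : 'I_N -> 'I_N -> option Y) (pi : 'S_N) : R :=
  \sum_(i < N) dX' (a i) (b (pi i)) `^ p
  + (2 * (N%:R - 1))^-1 * \sum_(i < N) \sum_(i' < N) dY' (g i i') (h (pi i) (pi i')) `^ p.
(* note: in MathComp x / 0 = 0, matching the convention 0/0 := 0 (for N = 1
   the double sum is d(y0,y0)^p = 0). *)

Definition DN (X Y : Type) (dX' : option X -> option X -> R)
    (dY' : option Y -> option Y -> R) (p : R) (N : nat)
    (a : 'I_N -> option X) (g : 'I_N -> 'I_N -> option Y)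
    (b : 'I_N -> option X) (h : 'I_N -> 'I_N -> option Y) : R :=
  N%:R `^ (- p^-1) *
  (\big[Num.min/Dcost dX' dY' p a g b h 1]_(pi : 'S_N) Dcost dX' dY' p a g b h pi) `^ p^-1.

(* Extension of a size-n1 graph to size n (indices >= n1 are the new ones). *)
Definition ext_v (X : Type) (n1 n : nat) (v : 'I_n1 -> option X) : 'I_n -> option X :=
  fun i => match (insub (val i) : option 'I_n1) with
           | Some j => v j
           | None => None
           end.

Definition ext_e (Y : Type) (y0 : Y) (n1 n : nat) (e : 'I_n1 -> 'I_n1 -> option Y)
    : 'I_n -> 'I_n -> option Y :=
  fun i i' =>
    match (insub (val i) : option 'I_n1),
          (insub (val i') : option 'I_n1) with
    | Some j, Some j' => e j j'
    | _, _ => if i == i' then Some y0 else None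
    end.

End Defs.

(* Main.v *)
Require Import Defs.
From mathcomp Require Import all_boot all_order all_algebra perm.
From mathcomp Require Import all_classical all_reals all_analysis.
Import Order.TTheory GRing.Theory Num.Theory.
Local Open Scope ring_scope.
Set Implicit Arguments. Unset Strict Implicit.

Section Aux.
Variable R : realType.

Lemma sum_narrow (n1 n : nat) (hn : (n1 <= n)%N) (G : 'I_n -> R) :
  (forall i : 'I_n, ~~ (val i < n1)%N -> G i = 0) ->
  \sum_(i < n) G i = \sum_(i < n1) G (widen_ord hn i).
Proof.
move=> H0; rewrite (bigID (fun i : 'I_n => (val i < n1)%N)) /=.
rewrite [X in _ + X]big1 ?addr0; last by move=> i /H0.
by rewrite big_ord_narrow.
Qed.

Definition extf (n1 n : nat) (hn : (n1 <= n)%N) (pi : 'S_n1) (i : 'I_n) : 'I_n :=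
  match (insub (val i) : option 'I_n1) with
  | Some j => widen_ord hn (pi j)
  | None => i end.

Lemma extf_old n1 n (hn : (n1 <= n)%N) pi (j : 'I_n1) :
  extf hn pi (widen_ord hn j) = widen_ord hn (pi j).
Proof. by rewrite /extf /= valK. Qed.

Lemma extf_new n1 n (hn : (n1 <= n)%N) pi (i : 'I_n) :
  ~~ (val i < n1)%N -> extf hn pi i = i.
Proof. by move=> H; rewrite /extf insubN. Qed.

Lemma extf_inj n1 n (hn : (n1 <= n)%N) pi : injective (extf hn pi).
Proof.
move=> i j; rewrite /extf.
case: insubP => [a ha hva|hi]; case: insubP => [b hb hvb|hj] //.
- move/(congr1 val)=> /= /val_inj /perm_inj E. apply: val_inj. by rewrite -hva -hvb E.
- by move=> E; move: hj; rewrite -E /= ltn_ord.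
- by move=> E; move: hi; rewrite E /= ltn_ord.
Qed.

Definition extp n1 n (hn : (n1 <= n)%N) (pi : 'S_n1) : 'S_n := perm (@extf_inj n1 n hn pi).

Lemma ext_v_old X n1 n (hn : (n1 <= n)%N) (v : 'I_n1 -> option X) j :
  @ext_v _ n1 n v (widen_ord hn j) = v j.
Proof. by rewrite /ext_v /= valK. Qed.

Lemma ext_v_new X n1 n (v : 'I_n1 -> option X) (i : 'I_n) :
  ~~ (val i < n1)%N -> @ext_v _ n1 n v i = None.
Proof. by move=> H; rewrite /ext_v insubN. Qed.

Lemma ext_e_old Y (y0 : Y) n1 n (hn : (n1 <= n)%N) (e : 'I_n1 -> 'I_n1 -> option Y) j j' :
  @ext_e _ y0 n1 n e (widen_ord hn j) (widen_ord hn j') = e j j'.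
Proof. by rewrite /ext_e /= !valK. Qed.

Lemma ext_e_new Y (y0 : Y) n1 n (e : 'I_n1 -> 'I_n1 -> option Y) (i i' : 'I_n) :
  ~~ ((val i < n1) && (val i' < n1))%N ->
  @ext_e _ y0 n1 n e i i' = if i == i' then Some y0 else None.
Proof.
rewrite /ext_e; case: (boolP (val i < n1)%N) => hi; case: (boolP (val i' < n1)%N) => hj //= _.
- have -> : (insub (val i') : option 'I_n1) = None by rewrite insubN.
  by case: (insub _).
- have -> : (insub (val i) : option 'I_n1) = None by rewrite insubN.
  by [].
- have -> : (insub (val i) : option 'I_n1) = None by rewrite insubN.
  by [].
Qed.

End Aux.

Theorem lemmaA (R : realType) (X Y : Type) (dX : X -> X -> R) (dY : Y -> Y -> R)
  (CX CY C1 p : R) (y0 : Y)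
  (hdX : is_pseudometric dX) (hdY : is_pseudometric dY)
  (hCX : 0 <= CX) (hC1 : 0 <= C1)
  (hdiamX : forall x x', dX x x' <= CX) (hdiamY : forall y y', dY y y' <= CY)
  (hp : 1 <= p) (hC : CX `^ p + CY `^ p / 2 <= C1 `^ p)
  (n1 n : nat) (hn1 : (1 <= n1)%N) (hn : (n1 <= n)%N)
  (v u : 'I_n1 -> option X) (e g : 'I_n1 -> 'I_n1 -> option Y)
  (hv : is_graph y0 v e) (hu : is_graph y0 u g) :
  DN (dXext dX p C1 CY) (dYext dY CY) p
     (@ext_v _ n1 n v) (@ext_e _ y0 n1 n e) (@ext_v _ n1 n u) (@ext_e _ y0 n1 n g)
  <= DN (dXext dX p C1 CY) (dYext dY CY) p v e u g.
Proof.
have p0 : p != 0 by apply/eqP => p0; move: hp; rewrite p0 ler10.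
have z0 : (0 : R) `^ p = 0 by rewrite powR0.
case: hdY => _ dYxx _ _.
set dX' := dXext dX p C1 CY.
set dY' := dYext dY CY.
set SX := fun sg : 'S_n1 => \sum_(i < n1) dX' (v i) (u (sg i)) `^ p.
set SY := fun sg : 'S_n1 =>
  \sum_(i < n1) \sum_(i' < n1) dY' (e i i') (g (sg i) (sg i')) `^ p.
have SYge0 sg : 0 <= SY sg by apply: sumr_ge0 => i _; apply: sumr_ge0 => j _; exact: powR_ge0.
have oldE sg (i : 'I_n) : (val (extp hn sg i) < n1)%N = (val i < n1)%N.
  rewrite /extp permE /extf; case: insubP => [a ha hva|hi] /=.
    by rewrite -hva !ltn_ord.
  by [].
have Zt : forall sg (i j : 'I_n), ~~ ((val i < n1) && (val j < n1))%N ->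
    dY' (@ext_e _ y0 n1 n e i j) (@ext_e _ y0 n1 n g (extp hn sg i) (extp hn sg j)) `^ p = 0.
  move=> sg i i' H; rewrite !ext_e_new ?oldE // (inj_eq perm_inj).
  by case: (i == i'); rewrite /dY' /= ?dYxx z0.
have costE sg : Dcost dX' dY' p (@ext_v _ n1 n v) (@ext_e _ y0 n1 n e)
     (@ext_v _ n1 n u) (@ext_e _ y0 n1 n g) (extp hn sg)
   = SX sg + (2 * (n%:R - 1))^-1 * SY sg.
  rewrite /Dcost; congr (_ + _ * _).
    rewrite (sum_narrow hn).
      by apply: eq_bigr => i _; rewrite /extp permE extf_old !ext_v_old.
    move=> i hi; rewrite /extp permE extf_new // !ext_v_new //.
  rewrite (@sum_narrow _ n1 n hn); last first.
    move=> i hi; apply: big1 => j _; apply: Zt; by rewrite negb_and hi.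
  apply: eq_bigr => i _; rewrite (@sum_narrow _ n1 n hn); last first.
    by move=> j hj; apply: Zt; rewrite negb_and hj orbT.
  by apply: eq_bigr => j _; rewrite /extp !permE !extf_old !ext_e_old.
have costLe sg : Dcost dX' dY' p (@ext_v _ n1 n v) (@ext_e _ y0 n1 n e)
     (@ext_v _ n1 n u) (@ext_e _ y0 n1 n g) (extp hn sg)
   <= Dcost dX' dY' p v e u g sg.
  rewrite costE /Dcost -/(SX sg) -/(SY sg) lerD2l.
  case: (ltnP 1 n1) => h1.
    apply: ler_wpM2r => //; rewrite lef_pV2 ?posrE.
    - by rewrite ler_pM2l // lerD2r ler_nat.
    - by rewrite mulr_gt0 // subr_gt0 ltr1n (leq_trans h1 hn).
    - by rewrite mulr_gt0 // subr_gt0 ltr1n.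
  have -> : SY sg = 0.
    apply: big1 => i _; apply: big1 => j _.
    have ij : i = j.
      apply: ord_inj; move: (leq_trans (ltn_ord i) h1) (leq_trans (ltn_ord j) h1).
      by rewrite !ltnS !leqn0 => /eqP-> /eqP->.
    subst j; case: hv => _ ->; case: hu => _ ->.
    by rewrite /dY' /= dYxx z0.
  by rewrite !mulr0.
rewrite /DN.
have nn1 : 0 < n1%:R :> R by rewrite ltr0n.
have nn : 0 < n%:R :> R by rewrite ltr0n (leq_trans hn1 hn).
have mge0 N (hN : (0 < N)%N) (a : 'I_N -> option X) gg (b : 'I_N -> option X) h :
   0 <= \big[Num.min/Dcost dX' dY' p a gg b h 1]_(sg : 'S_N) Dcost dX' dY' p a gg b h sg.
  have dc s : 0 <= Dcost dX' dY' p a gg b h s.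
    rewrite /Dcost addr_ge0 //.
      by apply: sumr_ge0 => *; exact: powR_ge0.
    apply: mulr_ge0.
      by rewrite invr_ge0 mulr_ge0 // subr_ge0 ler1n.
    by apply: sumr_ge0 => *; apply: sumr_ge0 => *; exact: powR_ge0.
  by apply: le_bigmin => [|s _]; exact: dc.
apply: ler_pM.
- exact: powR_ge0.
- exact: powR_ge0.
- rewrite !powRN lef_pV2 ?posrE ?powR_gt0 //.
  by apply: ge0_ler_powR; rewrite ?invr_ge0 ?nnegrE ?ler0n ?(le_trans ler01 hp) // ler_nat.
- apply: ge0_ler_powR; rewrite ?invr_ge0 ?nnegrE ?mge0 ?(leq_trans hn1 hn) ?(le_trans ler01 hp) //.
  apply: le_bigmin => [|sg _].
    apply: le_trans (costLe 1%g); exact: bigmin_le.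
  apply: le_trans (costLe sg); exact: bigmin_le.
Qed.
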